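(* Let $N,d\ge1$, $T>0$, $n\ge 2$, and let $x^n=(x^n_1,\dots,x^n_N)$, $v^n=\dot x^n$ be the solution on $[0,T]$ of the system $\dot x^n_i=v^n_i$, $\dot v^n_i=\frac1N\sum_{k=1}^N(v^n_k-v^n_i)\psi_n(|x^n_i-x^n_k|)$, $i=1,\dots,N$, with initial data $x^n(0),v^n(0)$. Then: 1. $x^n$ is $C^\infty$ in a neighborhood of every time $t$ such that $|x^n_i(t)-x^n_j(t)|>0$ for all $i\ne j$. 2. The average velocity $\frac1N\sum_{i=1}^N v^n_i(t)$ is constant in $t$. 3. There is a constant $M(n)$ with $\|v^n_i\|_{L^\infty([0,T])}\le M(n)$ for all $i$. 4. If the initial data $x^n(0),v^n(0)$ are bounded uniformly in $n$, then there is a constant $M$ independent of $n$ with $\|v^n_i\|_{L^\infty([0,T])}\le M$ for all $i$ and all $n$. 5. $|\dot v^n_i|\le 2M(n)n$. 6. If for some $t$ and some $i,j$ we have $x^n_i(t)=x^n_j(t)$ and $v^n_i(t)=v^n_j(t)$, then $x^n_i\equiv x^n_j$ on $[t,T]$. 7. If at some time $t$ we have $v^n_i(t)=v^n_j(t)$ for all $i,j$, then $v^n$ is constant on $[t,T]$.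
   Context: Let $\alpha\in(0,1)$ and $\psi(s)=s^{-\alpha}$ for $s>0$, $\psi(0)=0$. For each $n$, $\psi_n:[0,\infty)\to[0,\infty)$ is defined by $\psi_n(s)=\psi(s)$ for $s\ge (n-1)^{-1/\alpha}$, $\psi_n(s)=n$ for $s\le n^{-1/\alpha}$, and $\psi_n$ smooth and monotone on $[n^{-1/\alpha},(n-1)^{-1/\alpha}]$. For such smooth bounded weights the system has a unique global classical $C^2$ solution. *)

(* Defs.v *)
From Stdlib Require Import Reals.
From Coquelicot Require Import Coquelicot.
Open Scope R_scope.

Fixpoint rsum (n : nat) (f : nat -> R) : R :=
  match n with
  | O => 0
  | S m => rsum m f + f m
  end.

Definition enorm (d : nat) (u : nat -> R) : R :=
  sqrt (rsum d (fun l => u l ^ 2)).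

(* p is an admissible truncated weight psi_n for psi(s) = s^(-alpha):
   psi_n = psi on [(n-1)^(-1/alpha), oo), psi_n = n on [0, n^(-1/alpha)],
   monotone on [n^(-1/alpha), (n-1)^(-1/alpha)], and smooth. *)
Definition is_psi_n (alpha : R) (n : nat) (p : R -> R) : Prop :=
  (forall s, Rpower (INR n - 1) (- / alpha) <= s -> p s = Rpower s (- alpha)) /\
  (forall s, 0 <= s <= Rpower (INR n) (- / alpha) -> p s = INR n) /\
  ((forall s1 s2, Rpower (INR n) (- / alpha) <= s1 -> s1 <= s2 ->
                  s2 <= Rpower (INR n - 1) (- / alpha) -> p s2 <= p s1) \/
   (forall s1 s2, Rpower (INR n) (- / alpha) <= s1 -> s1 <= s2 ->
                  s2 <= Rpower (INR n - 1) (- / alpha) -> p s1 <= p s2)) /\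
  (forall s, 0 < s -> forall k, ex_derive_n p k s).

(* x i l t : l-th coordinate of particle i at time t; similarly v. *)
Definition accel (N d : nat) (psi : R -> R) (x v : nat -> nat -> R -> R)
  (i l : nat) (t : R) : R :=
  / INR N * rsum N (fun k =>
     (v k l t - v i l t) * psi (enorm d (fun m => x i m t - x k m t))).

(* classical solution of the system on [0,T]: ODEs hold on (0,T),
   x and v continuous on [0,T] (so initial data x(0), v(0) are attained). *)
Definition is_solution (N d : nat) (T : R) (psi : R -> R)
  (x v : nat -> nat -> R -> R) : Prop :=
  (forall i l, (i < N)%nat -> (l < d)%nat -> forall t, 0 < t < T ->
     is_derive (x i l) t (v i l t) /\
     is_derive (v i l) t (accel N d psi x v i l t)) /\
  (forall i l, (i < N)%nat -> (l < d)%nat -> forall t, 0 <= t <= T ->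
     filterlim (x i l) (within (fun s => 0 <= s <= T) (locally t)) (locally (x i l t)) /\
     filterlim (v i l) (within (fun s => 0 <= s <= T) (locally t)) (locally (v i l t))).

(* Main.v *)
Require Import Defs.
From Stdlib Require Import Reals Lra Lia Psatz.
From Coquelicot Require Import Coquelicot.
Open Scope R_scope.

Lemma rsum_ext n F G : (forall k, (k < n)%nat -> F k = G k) -> rsum n F = rsum n G.
Proof. induction n; simpl; intros H; auto. rewrite IHn by (intros; apply H; lia). rewrite H by lia. auto. Qed.

Lemma rsum_plus n F G : rsum n (fun k => F k + G k) = rsum n F + rsum n G.
Proof. induction n; simpl; [lra|]. rewrite IHn; lra. Qed.

Lemma rsum_minus n F G : rsum n (fun k => F k - G k) = rsum n F - rsum n G.
Proof. induction n; simpl; [lra|]. rewrite IHn; lra. Qed.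

Lemma rsum_scal n c F : rsum n (fun k => c * F k) = c * rsum n F.
Proof. induction n; simpl; [lra|]. rewrite IHn; lra. Qed.

Lemma rsum_const n c : rsum n (fun _ => c) = INR n * c.
Proof. induction n; [simpl; lra|]. rewrite S_INR. simpl rsum. rewrite IHn. lra. Qed.

Lemma rsum_le n F G : (forall k, (k < n)%nat -> F k <= G k) -> rsum n F <= rsum n G.
Proof. induction n; simpl; intros H; [lra|]. assert (H1 := H n ltac:(lia)).
 assert (rsum n F <= rsum n G) by (apply IHn; intros; apply H; lia). lra. Qed.

Lemma rsum_nonneg n F : (forall k, (k < n)%nat -> 0 <= F k) -> 0 <= rsum n F.
Proof. intros H. replace 0 with (rsum n (fun _ => 0)). apply rsum_le; auto.
 rewrite rsum_const; lra. Qed.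

Lemma rsum_term_le n F j : (forall k, (k < n)%nat -> 0 <= F k) -> (j < n)%nat -> F j <= rsum n F.
Proof. induction n; simpl; intros H Hj; [lia|].
 destruct (Nat.eq_dec j n). subst. assert (0 <= rsum n F) by (apply rsum_nonneg; intros; apply H; lia). lra.
 assert (F j <= rsum n F) by (apply IHn; [intros; apply H; lia | lia]). assert (0 <= F n) by (apply H; lia). lra. Qed.

Lemma rsum_exchange n m F : rsum n (fun i => rsum m (fun k => F i k)) = rsum m (fun k => rsum n (fun i => F i k)).
Proof. induction n; simpl. rewrite rsum_const; lra. rewrite IHn. rewrite <- rsum_plus. auto. Qed.

Lemma rsum_abs_le n F c : (forall k, (k < n)%nat -> Rabs (F k) <= c) -> Rabs (rsum n F) <= INR n * c.
Proof. induction n; intros H. simpl; rewrite Rabs_R0; lra. rewrite S_INR. simpl rsum.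
 assert (Rabs (rsum n F) <= INR n * c) by (apply IHn; intros; apply H; lia).
 assert (Rabs (F n) <= c) by (apply H; lia). pose proof (Rabs_triang (rsum n F) (F n)). lra. Qed.

Lemma rsum_sq_nonneg d u : 0 <= rsum d (fun l => u l ^ 2).
Proof. apply rsum_nonneg; intros; nra. Qed.

Lemma enorm_nonneg d u : 0 <= enorm d u.
Proof. apply sqrt_pos. Qed.

Lemma enorm_sq d u : enorm d u ^ 2 = rsum d (fun l => u l ^ 2).
Proof. unfold enorm. rewrite pow2_sqrt; auto. apply rsum_sq_nonneg. Qed.

Lemma enorm_sym d a b : enorm d (fun l => a l - b l) = enorm d (fun l => b l - a l).
Proof. unfold enorm. f_equal. apply rsum_ext; intros; ring. Qed.

Lemma coord_le_enorm d u l : (l < d)%nat -> Rabs (u l) <= enorm d u.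
Proof. intros H. unfold enorm. rewrite <- sqrt_Rsqr_abs. apply sqrt_le_1_alt.
 unfold Rsqr. replace (u l * u l) with (u l ^ 2) by ring.
 apply (rsum_term_le d (fun l => u l ^ 2)); auto. intros; nra. Qed.

Lemma enorm_le d u K : 0 <= K -> (forall l, (l < d)%nat -> Rabs (u l) <= K) -> enorm d u <= sqrt (INR d) * K.
Proof. intros HK H. unfold enorm. rewrite <- (sqrt_pow2 K HK). rewrite <- sqrt_mult_alt by apply pos_INR.
 apply sqrt_le_1_alt. rewrite <- rsum_const. apply rsum_le. intros k Hk.
 assert (Rabs (u k) <= K) by auto. pose proof (Rabs_pos (u k)).
 rewrite <- (pow2_abs (u k)). nra. Qed.

Lemma enorm_pos_coord d u : 0 < enorm d u -> exists l, (l < d)%nat /\ u l <> 0.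
Proof. intros H. destruct (Classical_Prop.classic (exists l, (l < d)%nat /\ u l <> 0)) as [E|E]; auto.
 exfalso. unfold enorm in H. rewrite (rsum_ext d _ (fun _ => 0)) in H. rewrite rsum_const in H.
 rewrite Rmult_0_r, sqrt_0 in H. lra. intros k Hk. destruct (Req_dec (u k) 0) as [e|e]. rewrite e; ring.
 exfalso; apply E; eauto. Qed.

Lemma mink2 p q r s : sqrt ((p+q)^2 + (r+s)^2) <= sqrt (p^2+r^2) + sqrt (q^2+s^2).
Proof.
 assert (A: 0 <= p^2+r^2) by nra. assert (B: 0 <= q^2+s^2) by nra.
 pose proof (sqrt_pos (p^2+r^2)). pose proof (sqrt_pos (q^2+s^2)).
 pose proof (pow2_sqrt _ A). pose proof (pow2_sqrt _ B).
 set (X := sqrt (p^2+r^2)) in *. set (Y := sqrt (q^2+s^2)) in *.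
 assert (p*q + r*s <= X*Y).
 { destruct (Rle_or_lt (p*q+r*s) 0). nra.
   rewrite <- (sqrt_pow2 (p*q+r*s)) by lra. unfold X, Y. rewrite <- sqrt_mult_alt by auto. apply sqrt_le_1_alt.
   replace ((p ^ 2 + r ^ 2) * (q ^ 2 + s ^ 2)) with ((p*q+r*s)^2 + (p*s-q*r)^2) by ring.
   pose proof (pow2_ge_0 (p*s-q*r)). lra. }
 rewrite <- (sqrt_pow2 (X+Y)) by lra. apply sqrt_le_1_alt. nra. Qed.

Lemma minkowski d a b : enorm d (fun l => a l + b l) <= enorm d a + enorm d b.
Proof. induction d. unfold enorm; simpl. rewrite sqrt_0; lra.
 unfold enorm in *; cbn [rsum].
 set (Sa := rsum d (fun l => a l ^ 2)) in *. set (Sb := rsum d (fun l => b l ^2)) in *.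
 set (Sab := rsum d (fun l => (a l + b l) ^ 2)) in *.
 assert (0 <= Sa) by apply rsum_sq_nonneg. assert (0 <= Sb) by apply rsum_sq_nonneg. assert (0 <= Sab) by apply rsum_sq_nonneg.
 pose proof (mink2 (sqrt Sa) (sqrt Sb) (a d) (b d)) as M2.
 rewrite !pow2_sqrt in M2 by auto. eapply Rle_trans; [|exact M2]. apply sqrt_le_1_alt.
 assert (sqrt Sab ^2 <= (sqrt Sa + sqrt Sb)^2). { pose proof (sqrt_pos Sab). apply pow_incr; lra. }
 rewrite pow2_sqrt in H2 by auto. lra. Qed.

Lemma enorm_rev d a b : Rabs (enorm d a - enorm d b) <= enorm d (fun l => a l - b l).
Proof. apply Rabs_le. split.
 - pose proof (minkowski d (fun l => b l - a l) a). simpl in H.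
   rewrite (enorm_sym d b a) in H. unfold enorm in *. rewrite (rsum_ext d (fun l => (b l - a l + a l)^2) (fun l => b l ^2)) in H by (intros; f_equal; ring). lra.
 - pose proof (minkowski d (fun l => a l - b l) b). unfold enorm in *.
   rewrite (rsum_ext d (fun l => (a l - b l + b l)^2) (fun l => a l ^2)) in H by (intros; f_equal; ring). lra. Qed.

Lemma Rpower_lt_base_neg x1 x2 y : 0 < x1 -> x1 < x2 -> y < 0 -> Rpower x2 y < Rpower x1 y.
Proof. intros. unfold Rpower. apply exp_increasing. pose proof (ln_increasing x1 x2 H H0). nra. Qed.

Lemma Rpower_le_base_neg x1 x2 y : 0 < x1 -> x1 <= x2 -> y <= 0 -> Rpower x2 y <= Rpower x1 y.
Proof. intros. unfold Rpower. destruct (Req_dec x1 x2). subst; lra.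
 destruct (Req_dec y 0). subst. rewrite !Rmult_0_l. lra.
 apply Rlt_le, exp_increasing. pose proof (ln_increasing x1 x2 H ltac:(lra)). nra. Qed.

Lemma Rpower_pos' x y : 0 < Rpower x y.
Proof. unfold Rpower. apply exp_pos. Qed.

Section Psi.
Variables (alpha : R) (n : nat) (p : R -> R).
Hypothesis (halpha : 0 < alpha < 1) (hn : (2 <= n)%nat) (hp : is_psi_n alpha n p).

Notation rho := (Rpower (INR n) (- / alpha)).
Notation rho' := (Rpower (INR n - 1) (- / alpha)).

Lemma INR_n_ge2 : 2 <= INR n.
Proof. replace 2 with (INR 2) by (simpl; lra). apply le_INR; auto. Qed.

Lemma rho_pos : 0 < rho. Proof. apply Rpower_pos'. Qed.
Lemma rho'_pos : 0 < rho'. Proof. apply Rpower_pos'. Qed.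
Lemma rho_lt : rho < rho'.
Proof. pose proof INR_n_ge2. apply Rpower_lt_base_neg; try lra.
 assert (0 < / alpha) by (apply Rinv_0_lt_compat; lra). lra. Qed.

Lemma p_rho : p rho = INR n.
Proof. destruct hp as [_ [H _]]. apply H. pose proof rho_pos. lra. Qed.

Lemma p_rho' : p rho' = INR n - 1.
Proof. destruct hp as [H _]. rewrite H by lra. rewrite Rpower_mult.
 replace (- / alpha * - alpha) with 1 by (field; lra). apply Rpower_1. pose proof INR_n_ge2; lra. Qed.

Lemma p_bounds s : 0 <= s -> 0 <= p s <= INR n.
Proof. intros Hs. pose proof INR_n_ge2. destruct hp as [H1 [H2 [H3 _]]].
 destruct (Rle_or_lt s rho). rewrite H2 by lra. lra.
 destruct (Rle_or_lt rho' s).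
 - rewrite H1 by lra. split. apply Rlt_le, Rpower_pos'.
   pose proof (Rpower_le_base_neg rho' s (- alpha) rho'_pos H4 ltac:(lra)) as Q1.
   pose proof p_rho' as Q2. rewrite H1 in Q2 by lra. lra.
 - pose proof p_rho. pose proof p_rho'. destruct H3 as [D|D].
   + pose proof (D rho s ltac:(lra) ltac:(lra) ltac:(lra)). pose proof (D s rho' ltac:(lra) ltac:(lra) ltac:(lra)). lra.
   + pose proof (D rho s ltac:(lra) ltac:(lra) ltac:(lra)). pose proof (D s rho' ltac:(lra) ltac:(lra) ltac:(lra)). lra.
Qed.

Lemma p_ex_derive s : 0 < s -> ex_derive p s.
Proof. intros. destruct hp as [_ [_ [_ H4]]]. exact (H4 s H 1%nat). Qed.

Lemma p_ex_derive2 s : 0 < s -> ex_derive (Derive p) s.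
Proof. intros. destruct hp as [_ [_ [_ H4]]]. exact (H4 s H 2%nat). Qed.

Lemma p_cont s : 0 < s -> continuity_pt p s.
Proof. intros. apply continuity_pt_filterlim. apply (ex_derive_continuous p). apply p_ex_derive; auto. Qed.

Lemma Derive_p_bound : exists L, 0 <= L /\ forall s, 0 < s -> Rabs (Derive p s) <= L.
Proof.
 destruct (continuity_ab_maj (fun s => Rabs (Derive p s)) rho rho') as [Mx [HM HMx]].
 { pose proof rho_lt; lra. }
 { intros c Hc. apply (continuity_pt_comp (Derive p) Rabs). apply continuity_pt_filterlim.
   apply (ex_derive_continuous (Derive p)). apply p_ex_derive2. pose proof rho_pos; lra. apply Rcontinuity_abs. }
 exists (Rmax (Rabs (Derive p Mx)) (alpha * Rpower rho' (- alpha - 1))). split.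
 { eapply Rle_trans; [|apply Rmax_l]. apply Rabs_pos. }
 intros s Hs. pose proof rho_lt. pose proof rho_pos. destruct hp as [H1 [H2 [H3 _]]].
 destruct (Rle_or_lt rho s).
 - destruct (Rle_or_lt s rho'). eapply Rle_trans; [|apply Rmax_l]. apply HM; lra.
   eapply Rle_trans; [|apply Rmax_r].
   assert (E: Derive p s = - alpha * Rpower s (-alpha - 1)).
   { rewrite (Derive_ext_loc p (fun s => Rpower s (-alpha))).
     apply is_derive_unique. apply is_derive_Reals. replace (-alpha-1) with (-alpha - 1) by ring.
     apply derivable_pt_lim_power. lra.
     apply (locally_interval _ s rho' p_infty); simpl; auto. intros y Hy _. apply H1; lra. }
   rewrite E. rewrite Rabs_mult. rewrite Rabs_Ropp, Rabs_pos_eq by lra. rewrite Rabs_pos_eq by (apply Rlt_le, Rpower_pos').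
   apply Rmult_le_compat_l. lra. apply Rpower_le_base_neg. apply rho'_pos. lra. lra.
 - eapply Rle_trans; [|apply Rmax_l]. eapply Rle_trans; [|apply Rabs_pos].
   rewrite (Derive_ext_loc p (fun _ => INR n)). rewrite Derive_const. rewrite Rabs_R0. lra.
   apply (locally_interval _ s 0 rho); simpl; auto. intros y Hy Hy'. apply H2; lra.
Qed.

Lemma p_lipschitz : exists L, 0 <= L /\ forall r1 r2, 0 <= r1 -> 0 <= r2 -> Rabs (p r1 - p r2) <= L * Rabs (r1 - r2).
Proof.
 destruct Derive_p_bound as [L [HL HD]]. exists L. split; auto.
 assert (Key: forall r1 r2, rho <= r1 -> rho <= r2 -> Rabs (p r1 - p r2) <= L * Rabs (r1 - r2)).
 { intros r1 r2 H1 H2. pose proof rho_pos.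
   destruct (MVT_gen p r2 r1 (Derive p)) as [c [Hc E]].
   - intros x Hx. apply Derive_correct. apply p_ex_derive. pose proof (Rmin_glb_lt r2 r1 0). destruct Hx. 
     assert (0 < Rmin r2 r1) by (apply Rmin_glb_lt; lra). lra.
   - intros x Hx. apply p_cont. assert (0 < Rmin r2 r1) by (apply Rmin_glb_lt; lra). lra.
   - rewrite E. rewrite Rabs_mult. apply Rmult_le_compat_r. apply Rabs_pos. apply HD.
     assert (0 < Rmin r2 r1) by (apply Rmin_glb_lt; lra). lra. }
 intros r1 r2 H1 H2.
 assert (Hm: forall r, 0 <= r -> p r = p (Rmax r rho)).
 { intros r Hr. destruct (Rle_or_lt r rho). rewrite Rmax_right by lra. rewrite p_rho.
   destruct hp as [_ [HH _]]. apply HH; lra. rewrite Rmax_left by lra. auto. }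
 rewrite (Hm r1), (Hm r2) by auto. eapply Rle_trans. apply Key; apply Rmax_r.
 apply Rmult_le_compat_l; auto.
 unfold Rmax; destruct (Rle_dec r1 rho), (Rle_dec r2 rho); apply Rabs_le; split;
 pose proof (Rabs_pos (r1 - r2)); try lra;
 first [ pose proof (Rle_abs (r1-r2)); lra | pose proof (Rle_abs (-(r1-r2))); rewrite Rabs_Ropp in *; lra ].
Qed.

End Psi.

#[global] Existing Instance within_filter.

Definition cw (D : R -> Prop) (f : R -> R) (t : R) :=
  filterlim f (within D (locally t)) (locally (f t)).

Lemma cw_eps D f t : cw D f t -> forall eps, 0 < eps -> exists delta, 0 < delta /\
  forall s, D s -> Rabs (s - t) < delta -> Rabs (f s - f t) < eps.
Proof. intros H eps He. unfold cw in H. pose proof (proj1 (filterlim_locally (F := within D (locally t)) f (f t)) H) as H'.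
 destruct (H' (mkposreal eps He)) as [del Hd]. exists del. split. apply cond_pos.
 intros s Hs Hst. apply (Hd s). apply Hst. auto. Qed.

Lemma cw_sub (D D' : R -> Prop) f t : (forall s, D' s -> D s) -> cw D f t -> cw D' f t.
Proof. intros HD H. unfold cw. eapply filterlim_filter_le_1; [|exact H].
 intros P HP. unfold within in *. apply (filter_imp (fun x => D x -> P x)); auto. Qed.

Lemma cw_derive D f t : ex_derive f t -> cw D f t.
Proof. intros H. unfold cw. eapply filterlim_filter_le_1; [|apply (ex_derive_continuous f t H)].
 intros P HP. unfold within. apply (filter_imp P); auto. Qed.

Lemma cw_const D c t : cw D (fun _ => c) t.
Proof. unfold cw. apply filterlim_const. Qed.

Lemma cw_plus D f g t : cw D f t -> cw D g t -> cw D (fun s => f s + g s) t.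
Proof. intros Hf Hg. unfold cw in *. eapply filterlim_comp_2; eauto. apply (filterlim_plus (f t) (g t)). Qed.

Lemma cw_mult D f g t : cw D f t -> cw D g t -> cw D (fun s => f s * g s) t.
Proof. intros Hf Hg. unfold cw in *. eapply filterlim_comp_2; eauto. apply (filterlim_mult (f t) (g t)). Qed.

Lemma cw_comp D f (g : R -> R) t : cw D f t -> continuous g (f t) -> cw D (fun s => g (f s)) t.
Proof. intros Hf Hg. unfold cw in *. eapply filterlim_comp; eauto. Qed.

Lemma cw_opp D f t : cw D f t -> cw D (fun s => - f s) t.
Proof. intros H. apply (cw_comp D f Ropp t H). apply continuity_pt_filterlim. apply continuity_pt_opp. apply continuity_pt_id. Qed.

Lemma cw_minus D f g t : cw D f t -> cw D g t -> cw D (fun s => f s - g s) t.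
Proof. intros. apply cw_plus; auto. apply cw_opp; auto. Qed.

Lemma cw_rsum D n (F : nat -> R -> R) t : (forall k, (k < n)%nat -> cw D (F k) t) -> cw D (fun s => rsum n (fun k => F k s)) t.
Proof. induction n; intros H; simpl. apply cw_const. apply cw_plus. apply IHn; intros; apply H; lia. apply H; lia. Qed.

Lemma cw_ext D f g t : (forall s, f s = g s) -> cw D f t -> cw D g t.
Proof. intros E H. unfold cw in *. rewrite <- E. eapply filterlim_ext; eauto. Qed.

Lemma mono_open a b f df : (forall s, a < s < b -> is_derive f s (df s) /\ df s <= 0) ->
  forall p q, a < p -> p <= q -> q < b -> f q <= f p.
Proof. intros H p q Hp Hpq Hq. destruct (Req_dec p q). subst; lra.
 destruct (MVT_gen f p q df) as [c [Hc E]].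
 - intros x Hx. rewrite Rmin_left, Rmax_right in Hx by lra. apply H; lra.
 - intros x Hx. rewrite Rmin_left, Rmax_right in Hx by lra. apply continuity_pt_filterlim.
   apply (ex_derive_continuous f). exists (df x). apply H; lra.
 - rewrite Rmin_left, Rmax_right in Hc by lra. destruct (H c ltac:(lra)) as [_ Hd].
   assert (df c * (q - p) <= 0) by (apply Rmult_le_0_r; lra). lra.
Qed.

Lemma mono a b f df : a <= b -> (forall s, a < s < b -> is_derive f s (df s) /\ df s <= 0) ->
  cw (fun s => a <= s <= b) f a -> cw (fun s => a <= s <= b) f b ->
  forall s, a <= s <= b -> f s <= f a.
Proof. intros Hab H Ca Cb.
 assert (Int: forall s, a < s < b -> f s <= f a).
 { intros s Hs. destruct (Rle_or_lt (f s) (f a)); auto. exfalso.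
   destruct (cw_eps _ _ _ Ca (f s - f a) ltac:(lra)) as [del [Hdel Hd]].
   set (a' := a + Rmin (del/2) ((s-a)/2)).
   assert (0 < Rmin (del/2) ((s-a)/2)) by (apply Rmin_glb_lt; lra).
   assert (Rmin (del/2) ((s-a)/2) <= del/2) by apply Rmin_l. assert (Rmin (del/2) ((s-a)/2) <= (s-a)/2) by apply Rmin_r.
   assert (f s <= f a') by (apply (mono_open a b f df H); unfold a'; lra).
   assert (Rabs (f a' - f a) < f s - f a). { apply Hd. unfold a'; lra. unfold a'. rewrite Rabs_pos_eq; lra. }
   pose proof (Rle_abs (f a' - f a)). lra. }
 intros s Hs. destruct (Req_dec s a). subst; lra. destruct (Req_dec s b).
 2: apply Int; lra.
 subst s. destruct (Rle_or_lt (f b) (f a)); auto. exfalso.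
 destruct (cw_eps _ _ _ Cb (f b - f a) ltac:(lra)) as [del [Hdel Hd]].
 set (b' := b - Rmin (del/2) ((b-a)/2)).
 assert (0 < Rmin (del/2) ((b-a)/2)) by (apply Rmin_glb_lt; lra).
 assert (Rmin (del/2) ((b-a)/2) <= del/2) by apply Rmin_l. assert (Rmin (del/2) ((b-a)/2) <= (b-a)/2) by apply Rmin_r.
 assert (f b' <= f a) by (apply Int; unfold b'; lra).
 assert (Rabs (f b' - f b) < f b - f a). { apply Hd. unfold b'; lra. unfold b'. rewrite Rabs_left; lra. }
 pose proof (Rle_abs (-(f b' - f b))) as Q. rewrite Rabs_Ropp in Q. lra.
Qed.

Lemma gronwall a b f df C : a <= b -> (forall s, a < s < b -> is_derive f s (df s) /\ df s <= C * f s) ->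
  cw (fun s => a <= s <= b) f a -> cw (fun s => a <= s <= b) f b -> f a <= 0 ->
  forall s, a <= s <= b -> f s <= 0.
Proof. intros Hab H Ca Cb Ha s Hs.
 set (g := fun s => f s * exp (- C * s)).
 assert (Cexp: forall t, continuous (fun s => exp (- C * s)) t).
 { intros t. apply (ex_derive_continuous (fun s => exp (-C * s))). auto_derive. auto. }
 assert (Hg: forall s, a <= s <= b -> g s <= g a).
 { apply (mono a b g (fun s => df s * exp (-C*s) + f s * (- C * exp (-C * s)))); auto.
   - intros u Hu. destruct (H u Hu) as [D1 D2]. split.
     + unfold g. apply (is_derive_mult f (fun s => exp (-C * s))). auto.
       auto_derive. auto. ring. intros; apply Rmult_comm.
     + pose proof (exp_pos (-C*u)). nra.
   - apply cw_mult; auto. apply cw_derive. auto_derive; auto.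
   - apply cw_mult; auto. apply cw_derive. auto_derive; auto. }
 pose proof (Hg s Hs). unfold g in H0. pose proof (exp_pos (-C*s)). pose proof (exp_pos (-C*a)).
 assert (f a * exp (- C * a) <= 0) by nra. nra.
Qed.

Lemma D_comp (f g : R -> R) x df dg : is_derive f (g x) df -> is_derive g x dg -> is_derive (fun t => f (g t)) x (df * dg).
Proof. intros H1 H2. replace (df * dg) with (scal dg df). apply (is_derive_comp f g); auto.
 unfold scal; simpl; unfold mult; simpl; ring. Qed.

Lemma D_plus (f g : R -> R) x df dg : is_derive f x df -> is_derive g x dg -> is_derive (fun t => f t + g t) x (df + dg).
Proof. intros. apply (is_derive_plus f g); auto. Qed.

Lemma D_minus (f g : R -> R) x df dg : is_derive f x df -> is_derive g x dg -> is_derive (fun t => f t - g t) x (df - dg).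
Proof. intros. apply (is_derive_minus f g); auto. Qed.

Lemma D_mult (f g : R -> R) x df dg : is_derive f x df -> is_derive g x dg -> is_derive (fun t => f t * g t) x (df * g x + f x * dg).
Proof. intros. apply (is_derive_mult f g); auto. intros; apply Rmult_comm. Qed.

Lemma D_const (c : R) x : is_derive (fun _ => c) x 0.
Proof. apply (is_derive_const c). Qed.

Lemma D_ext (f g : R -> R) x d d' : (forall t, f t = g t) -> d = d' -> is_derive f x d -> is_derive g x d'.
Proof. intros E E' H. subst. apply (is_derive_ext f g); auto. Qed.

Lemma D_eq (f : R -> R) x d d' : is_derive f x d -> d = d' -> is_derive f x d'.
Proof. intros H E; subst; auto. Qed.

Lemma D_ext' (f g : R -> R) x d d' : is_derive f x d -> (forall t, f t = g t) -> d = d' -> is_derive g x d'.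
Proof. intros H E E'. subst. apply (is_derive_ext f g); auto. Qed.

Definition qf (y : R) := Rmax y 0 ^ 2.

Lemma qf_derive y : is_derive qf y (2 * Rmax y 0).
Proof. destruct (Rtotal_order y 0) as [H|[H|H]].
 - rewrite Rmax_right by lra. replace (2*0) with 0 by ring.
   apply (is_derive_ext_loc (fun _ => 0)). apply (locally_interval _ y m_infty 0); simpl; auto.
   intros z _ Hz. unfold qf. rewrite Rmax_right by lra. ring. apply (is_derive_const 0).
 - subst. rewrite Rmax_right by lra. apply is_derive_Reals. intros eps He.
   exists (mkposreal eps He). intros h Hh Hd. simpl in Hd. unfold qf. rewrite Rplus_0_l.
   rewrite (Rmax_right 0 0) by lra. unfold Rmax. destruct (Rle_dec h 0).
   + replace ((0^2 - 0^2)/h - 2*0) with 0 by (field; auto). rewrite Rabs_R0; auto.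
   + replace ((h^2 - 0^2)/h - 2*0) with h by (field; auto). auto.
 - apply (is_derive_ext_loc (fun z => z^2)). apply (locally_interval _ y 0 p_infty); simpl; auto.
   intros z Hz _. unfold qf. rewrite Rmax_left by lra. ring. rewrite Rmax_left by lra.
   auto_derive; auto. ring.
Qed.

Lemma qf_nonneg y : 0 <= qf y.
Proof. unfold qf. apply pow2_ge_0. Qed.

Lemma qf_zero y : qf y <= 0 -> y <= 0.
Proof. unfold qf. intros H. assert (Rmax y 0 = 0). { pose proof (pow2_ge_0 (Rmax y 0)). nra. }
 pose proof (Rmax_l y 0). lra. Qed.

Lemma qf_cont y : continuous qf y.
Proof. apply (ex_derive_continuous qf). exists (2 * Rmax y 0). apply qf_derive. Qed.

Lemma term_bound yi yk cc K : 0 <= cc <= K -> 2 * Rmax yi 0 * ((yk - yi) * cc) <= K * Rmax yk 0 ^ 2.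
Proof. intros [H0 H1]. unfold Rmax. destruct (Rle_dec yi 0); destruct (Rle_dec yk 0).
 - simpl. nra.
 - assert (0 <= K * (yk*yk)) by (apply Rmult_le_pos; nra). simpl. nra.
 - assert (0 <= yi * ((yi - yk) * cc)) by (apply Rmult_le_pos; [lra| apply Rmult_le_pos; lra]). simpl. nra.
 - assert (0 <= (yk - yi)^2 + yi^2) by nra.
   destruct (Rle_or_lt yk yi).
   + assert (0 <= yi * ((yi - yk) * cc)) by (apply Rmult_le_pos; [lra| apply Rmult_le_pos; lra]).
     assert (0 <= K * (yk*yk)) by (apply Rmult_le_pos; nra). simpl. nra.
   + assert (2*yi*(yk-yi)*cc <= 2*yi*(yk-yi)*K) by (apply Rmult_le_compat_l; nra).
     assert (0 <= K * ((yk - yi)^2 + yi^2)) by (apply Rmult_le_pos; lra).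
     simpl in *. nra.
Qed.

Lemma is_derive_rsum n (F : nat -> R -> R) dF s : (forall k, (k < n)%nat -> is_derive (F k) s (dF k)) ->
  is_derive (fun t => rsum n (fun k => F k t)) s (rsum n dF).
Proof. induction n; intros H; simpl. apply (is_derive_const 0).
 apply (is_derive_plus (fun t => rsum n (fun k => F k t)) (F n)). apply IHn; intros; apply H; lia. apply H; lia. Qed.

Lemma maxp N (w : nat -> R -> R) (c : nat -> nat -> R -> R) a b K m :
  (1 <= N)%nat -> a <= b -> 0 <= K ->
  (forall i, (i < N)%nat -> forall s, a < s < b ->
     is_derive (w i) s (/ INR N * rsum N (fun k => (w k s - w i s) * c i k s))) ->
  (forall i k s, (i < N)%nat -> (k < N)%nat -> a < s < b -> 0 <= c i k s <= K) ->
  (forall i, (i < N)%nat -> cw (fun s => a <= s <= b) (w i) a /\ cw (fun s => a <= s <= b) (w i) b) ->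
  (forall i, (i < N)%nat -> w i a <= m) ->
  forall i s, (i < N)%nat -> a <= s <= b -> w i s <= m.
Proof. intros HN Hab HK Hd Hc Hcw Ha.
 assert (HNp: 0 < INR N) by (apply lt_0_INR; lia).
 set (E := fun s => rsum N (fun i => qf (w i s - m))).
 assert (G: forall s, a <= s <= b -> E s <= 0).
 { apply (gronwall a b E (fun s => rsum N (fun i => 2 * Rmax (w i s - m) 0 * (/ INR N * rsum N (fun k => (w k s - w i s) * c i k s)))) K Hab).
   - intros s Hs. split.
     + unfold E. apply (is_derive_rsum N (fun i s => qf (w i s - m))). intros i Hi.
       apply (D_comp qf (fun s => w i s - m)). apply qf_derive.
       replace (/ INR N * rsum N (fun k => (w k s - w i s) * c i k s)) with
         ((/ INR N * rsum N (fun k => (w k s - w i s) * c i k s)) - 0) by ring.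
       apply (D_minus (w i) (fun _ => m)); [apply Hd; auto|apply D_const].
     + unfold E. apply Rle_trans with (rsum N (fun i => / INR N * rsum N (fun k => K * qf (w k s - m)))).
       2: { rewrite rsum_const. rewrite rsum_scal. right. field. lra. }
       apply rsum_le. intros i Hi.
       match goal with |- ?X <= _ => replace X with (/ INR N * rsum N (fun k => 2 * Rmax (w i s - m) 0 * ((w k s - w i s) * c i k s)))
         by (rewrite rsum_scal; ring) end.
       * apply Rmult_le_compat_l. apply Rlt_le, Rinv_0_lt_compat; auto. apply rsum_le. intros k Hk.
         unfold qf. replace (w k s - w i s) with ((w k s - m) - (w i s - m)) by ring.
         apply term_bound. apply Hc; auto.
   - unfold E. apply cw_rsum. intros k Hk. apply cw_comp. apply cw_minus. apply Hcw; auto. apply cw_const. apply qf_cont.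
   - unfold E. apply cw_rsum. intros k Hk. apply cw_comp. apply cw_minus. apply Hcw; auto. apply cw_const. apply qf_cont.
   - unfold E. replace 0 with (rsum N (fun _ => 0)) by (rewrite rsum_const; ring). apply rsum_le.
     intros k Hk. unfold qf. rewrite Rmax_right. simpl; lra. pose proof (Ha k Hk). lra. }
 intros i s Hi Hs. pose proof (G s Hs). unfold E in H.
 pose proof (rsum_term_le N (fun i => qf (w i s - m)) i (fun k _ => qf_nonneg _) Hi). simpl in H0.
 pose proof (qf_zero (w i s - m)). lra.
Qed.

Lemma rsum_antisym N (w : nat -> R) (c : nat -> nat -> R) :
  (forall i k, (i < N)%nat -> (k < N)%nat -> c i k = c k i) ->
  rsum N (fun i => rsum N (fun k => (w k - w i) * c i k)) = 0.
Proof. intros Hs.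
 rewrite (rsum_ext N _ (fun i => rsum N (fun k => w k * c i k) - rsum N (fun k => w i * c i k))).
 2: { intros i Hi. rewrite <- rsum_minus. apply rsum_ext. intros; ring. }
 rewrite rsum_minus. rewrite (rsum_exchange N N (fun i k => w k * c i k)).
 rewrite (rsum_ext N (fun k => rsum N (fun i => w k * c i k)) (fun k => rsum N (fun i => w k * c k i))). ring.
 intros k Hk. apply rsum_ext. intros i Hi. rewrite Hs; auto. Qed.

Section Sol.
Variables (N d : nat) (T alpha : R) (n : nat) (p : R -> R) (x v : nat -> nat -> R -> R).
Hypotheses (hN : (1 <= N)%nat) (hd : (1 <= d)%nat) (hT : 0 < T) (halpha : 0 < alpha < 1)
  (hn : (2 <= n)%nat) (hp : is_psi_n alpha n p) (hsol : is_solution N d T p x v).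

Definition cc i k s := p (enorm d (fun m => x i m s - x k m s)).

Lemma cc_sym i k s : cc i k s = cc k i s.
Proof. unfold cc. rewrite enorm_sym. auto. Qed.

Lemma cc_bounds i k s : 0 <= cc i k s <= INR n.
Proof. apply (p_bounds alpha n p halpha hn hp). apply enorm_nonneg. Qed.

Lemma dv i l s : (i < N)%nat -> (l < d)%nat -> 0 < s < T ->
  is_derive (v i l) s (/ INR N * rsum N (fun k => (v k l s - v i l s) * cc i k s)).
Proof. intros. destruct hsol as [HS1 _]. apply HS1; auto. Qed.

Lemma dx i l s : (i < N)%nat -> (l < d)%nat -> 0 < s < T -> is_derive (x i l) s (v i l s).
Proof. intros. destruct hsol as [HS1 _]. apply HS1; auto. Qed.

Lemma cwv i l t : (i < N)%nat -> (l < d)%nat -> 0 <= t <= T -> cw (fun s => 0 <= s <= T) (v i l) t.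
Proof. intros. destruct hsol as [_ HS2]. apply HS2; auto. Qed.

Lemma cwx i l t : (i < N)%nat -> (l < d)%nat -> 0 <= t <= T -> cw (fun s => 0 <= s <= T) (x i l) t.
Proof. intros. destruct hsol as [_ HS2]. apply HS2; auto. Qed.

Lemma cwv' a i l t : (i < N)%nat -> (l < d)%nat -> 0 <= a -> a <= t <= T -> cw (fun s => a <= s <= T) (v i l) t.
Proof. intros. apply (cw_sub (fun s => 0 <= s <= T)). intros; lra. apply cwv; auto; lra. Qed.

Lemma cwx' a i l t : (i < N)%nat -> (l < d)%nat -> 0 <= a -> a <= t <= T -> cw (fun s => a <= s <= T) (x i l) t.
Proof. intros. apply (cw_sub (fun s => 0 <= s <= T)). intros; lra. apply cwx; auto; lra. Qed.

Lemma v_upper l a m : (l < d)%nat -> 0 <= a <= T -> (forall i, (i < N)%nat -> v i l a <= m) ->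
  forall i s, (i < N)%nat -> a <= s <= T -> v i l s <= m.
Proof. intros Hl Ha Hm. apply (maxp N (fun i => v i l) cc a T (INR n) m hN ltac:(lra) (pos_INR n)).
 - intros i Hi s Hs. apply dv; auto; lra.
 - intros; apply cc_bounds.
 - intros i Hi. split; apply cwv'; auto; lra.
 - auto. Qed.

Lemma v_lower l a m : (l < d)%nat -> 0 <= a <= T -> (forall i, (i < N)%nat -> m <= v i l a) ->
  forall i s, (i < N)%nat -> a <= s <= T -> m <= v i l s.
Proof. intros Hl Ha Hm i s Hi Hs.
 cut (- v i l s <= - m). lra. revert i s Hi Hs.
 apply (maxp N (fun i s => - v i l s) cc a T (INR n) (-m) hN ltac:(lra) (pos_INR n)).
 - intros i Hi s Hs. eapply D_ext. intros; reflexivity. 2: apply (is_derive_opp (v i l)); apply dv; auto; lra.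
   unfold opp; simpl.
   rewrite (rsum_ext N (fun k => (- v k l s - - v i l s) * cc i k s) (fun k => -1 * ((v k l s - v i l s) * cc i k s))) by (intros; ring).
   rewrite rsum_scal. ring.
 - intros; apply cc_bounds.
 - intros i Hi. split; apply cw_opp; apply cwv'; auto; lra.
 - intros i Hi. pose proof (Hm i Hi). lra. Qed.

Lemma v_abs_bound B : (forall i l, (i < N)%nat -> (l < d)%nat -> Rabs (v i l 0) <= B) ->
  forall i l s, (i < N)%nat -> (l < d)%nat -> 0 <= s <= T -> Rabs (v i l s) <= B.
Proof. intros HB i l s Hi Hl Hs. apply Rabs_le. split.
 - apply (v_lower l 0 (-B)); auto; try lra. intros k Hk. pose proof (HB k l Hk Hl). apply Rabs_le_between in H. lra.
 - apply (v_upper l 0 B); auto; try lra. intros k Hk. pose proof (HB k l Hk Hl). apply Rabs_le_between in H. lra.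
Qed.


Lemma avg_const l t : (l < d)%nat -> 0 <= t <= T ->
  / INR N * rsum N (fun i => v i l t) = / INR N * rsum N (fun i => v i l 0).
Proof. intros Hl Ht. f_equal.
 set (S := fun s => rsum N (fun i => v i l s)).
 assert (DS: forall s, 0 < s < T -> is_derive S s 0).
 { intros s Hs. unfold S. eapply D_eq. apply (is_derive_rsum N (fun i => v i l)).
   { intros i Hi. apply dv; auto. }
   rewrite rsum_scal. rewrite (rsum_antisym N (fun k => v k l s) (fun i k => cc i k s)). apply Rmult_0_r.
   intros; apply cc_sym. }
 assert (CS: forall a, 0 <= a <= T -> cw (fun s => 0 <= s <= T) S a).
 { intros a Ha. unfold S. apply cw_rsum. intros k Hk. apply cwv; auto. }
 assert (S t <= S 0). { apply (mono 0 T S (fun _ => 0)); [lra| | apply CS; lra | apply CS; lra | lra].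
   intros s Hs; split; [apply DS; lra | lra]. }
 assert (- S t <= - S 0). { apply (mono 0 T (fun s => - S s) (fun _ => - 0)); [lra| | | | lra].
   intros s Hs; split; [|lra]. apply (is_derive_opp S). apply DS; lra. apply cw_opp; apply CS; lra. apply cw_opp; apply CS; lra. }
 unfold S in *. lra. Qed.

Lemma claim35 : exists M,
  (forall i t, (i < N)%nat -> 0 <= t <= T -> enorm d (fun l => v i l t) <= M) /\
  (forall i t, (i < N)%nat -> 0 < t < T -> enorm d (fun l => Derive (v i l) t) <= 2 * M * INR n).
Proof.
 set (K0 := rsum N (fun i => rsum d (fun l => Rabs (v i l 0)))).
 assert (HK: forall i l, (i < N)%nat -> (l < d)%nat -> Rabs (v i l 0) <= K0).
 { intros i l Hi Hl. unfold K0. eapply Rle_trans.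
   apply (rsum_term_le d (fun l => Rabs (v i l 0)) l); auto. intros; apply Rabs_pos.
   apply (rsum_term_le N (fun i => rsum d (fun l => Rabs (v i l 0))) i); auto.
   intros; apply rsum_nonneg; intros; apply Rabs_pos. }
 assert (K0pos: 0 <= K0). { unfold K0. apply rsum_nonneg; intros; apply rsum_nonneg; intros; apply Rabs_pos. }
 pose proof (v_abs_bound K0 HK) as VB.
 exists (sqrt (INR d) * K0). split.
 - intros i t Hi Ht. apply enorm_le; auto.
 - intros i t Hi Ht. replace (2 * (sqrt (INR d) * K0) * INR n) with (sqrt (INR d) * (2 * K0 * INR n)) by ring.
   apply enorm_le. pose proof (pos_INR n); nra.
   intros l Hl. rewrite (is_derive_unique _ _ _ (dv i l t Hi Hl Ht)).
   assert (HNp: 0 < INR N) by (apply lt_0_INR; lia).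
   rewrite Rabs_mult. rewrite Rabs_pos_eq by (apply Rlt_le, Rinv_0_lt_compat; auto).
   apply Rle_trans with (/ INR N * (INR N * (2 * K0 * INR n))).
   apply Rmult_le_compat_l. apply Rlt_le, Rinv_0_lt_compat; auto.
   apply rsum_abs_le. intros k Hk. rewrite Rabs_mult. pose proof (cc_bounds i k t).
   rewrite (Rabs_pos_eq (cc i k t)) by lra.
   assert (Rabs (v k l t - v i l t) <= 2 * K0).
   { pose proof (VB k l t Hk Hl ltac:(lra)). pose proof (VB i l t Hi Hl ltac:(lra)).
     pose proof (Rabs_triang (v k l t) (- v i l t)). rewrite Rabs_Ropp in H2. unfold Rminus. lra. }
   apply Rmult_le_compat; auto. apply Rabs_pos. lra. lra.
   right. field. lra.
Qed.

Lemma claim7 t : 0 <= t <= T ->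
  (forall i j l, (i < N)%nat -> (j < N)%nat -> (l < d)%nat -> v i l t = v j l t) ->
  forall i l s, (i < N)%nat -> (l < d)%nat -> t <= s <= T -> v i l s = v i l t.
Proof. intros Ht H i l s Hi Hl Hs.
 assert (v i l s <= v 0%nat l t). { apply (v_upper l t (v 0%nat l t)); auto. intros k Hk. rewrite (H k 0%nat l); auto; try lra; lia. }
 assert (v 0%nat l t <= v i l s). { apply (v_lower l t (v 0%nat l t)); auto. intros k Hk. rewrite (H k 0%nat l); auto; try lra; lia. }
 rewrite (H i 0%nat l) in *; auto; try lra; lia. Qed.

End Sol.

Lemma term6 X V Aa E A B : 0 <= A -> 0 <= B -> 0 <= E -> Rabs Aa <= A * Rabs V + B * E ->
  (V * X + X * V) + (Aa * V + V * Aa) <= (1 + 2*A + B) * (X^2 + V^2) + B * E^2.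
Proof. intros HA HB HE H.
 assert (H1: V * Aa <= Rabs V * Rabs Aa) by (rewrite <- Rabs_mult; apply Rle_abs).
 assert (H2: Rabs V * Rabs Aa <= Rabs V * (A * Rabs V + B * E)) by (apply Rmult_le_compat_l; [apply Rabs_pos|auto]).
 assert (H3: Rabs V * Rabs V = V^2) by (rewrite <- Rabs_mult; rewrite Rabs_pos_eq; [ring| nra]).
 assert (H4: 2 * (Rabs V * E) <= V^2 + E^2). { rewrite <- H3. pose proof (pow2_ge_0 (Rabs V - E)). nra. }
 assert (H5: 0 <= X^2) by nra. assert (H6: 0 <= V^2) by nra.
 assert (H7: B * (2 * (Rabs V * E)) <= B * (V^2 + E^2)) by (apply Rmult_le_compat_l; auto).
 assert (H8: A * V^2 <= A * (X^2+V^2)) by (apply Rmult_le_compat_l; lra).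
 assert (H9: B * V^2 <= B * (X^2+V^2)) by (apply Rmult_le_compat_l; lra).
 assert (2*X*V <= X^2 + V^2) by (pose proof (pow2_ge_0 (X - V)); nra).
 nra. Qed.

Section Stick.
Variables (N d : nat) (T alpha : R) (n : nat) (p : R -> R) (x v : nat -> nat -> R -> R).
Hypotheses (hN : (1 <= N)%nat) (hd : (1 <= d)%nat) (hT : 0 < T) (halpha : 0 < alpha < 1)
  (hn : (2 <= n)%nat) (hp : is_psi_n alpha n p) (hsol : is_solution N d T p x v).

Lemma vbound_exists : exists K0, 0 <= K0 /\ forall i l s, (i < N)%nat -> (l < d)%nat -> 0 <= s <= T -> Rabs (v i l s) <= K0.
Proof.
 set (K0 := rsum N (fun i => rsum d (fun l => Rabs (v i l 0)))).
 assert (HK: forall i l, (i < N)%nat -> (l < d)%nat -> Rabs (v i l 0) <= K0).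
 { intros i l Hi Hl. unfold K0. eapply Rle_trans.
   apply (rsum_term_le d (fun l => Rabs (v i l 0)) l); auto. intros; apply Rabs_pos.
   apply (rsum_term_le N (fun i => rsum d (fun l => Rabs (v i l 0))) i); auto.
   intros; apply rsum_nonneg; intros; apply Rabs_pos. }
 exists K0. split. unfold K0. apply rsum_nonneg; intros; apply rsum_nonneg; intros; apply Rabs_pos.
 eapply (v_abs_bound N d T alpha n p x v); eauto. Qed.

Lemma claim6 t i j : 0 <= t <= T -> (i < N)%nat -> (j < N)%nat ->
  (forall l, (l < d)%nat -> x i l t = x j l t /\ v i l t = v j l t) ->
  forall s, t <= s <= T -> forall l, (l < d)%nat -> x i l s = x j l s.
Proof. intros Ht Hi Hj H0.
 destruct vbound_exists as [K0 [HK0 VB]].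
 destruct (p_lipschitz alpha n p halpha hn hp) as [L [HL Lip]].
 assert (HNp: 0 < INR N) by (apply lt_0_INR; lia).
 set (ccp := cc d p x).
 set (Ex := fun s => enorm d (fun m => x i m s - x j m s)).
 set (Dv := fun l s => v i l s - v j l s).
 set (ai := fun l s => / INR N * rsum N (fun k => (v k l s - v i l s) * ccp i k s)).
 set (aj := fun l s => / INR N * rsum N (fun k => (v k l s - v j l s) * ccp j k s)).
 assert (DA: forall l s, (l < d)%nat -> 0 <= s <= T -> Rabs (ai l s - aj l s) <= INR n * Rabs (Dv l s) + (2 * K0 * L) * Ex s).
 { intros l s Hl Hs. unfold ai, aj. rewrite <- Rmult_minus_distr_l. rewrite <- rsum_minus.
   rewrite Rabs_mult. rewrite Rabs_pos_eq by (apply Rlt_le, Rinv_0_lt_compat; auto).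
   apply Rle_trans with (/ INR N * (INR N * (INR n * Rabs (Dv l s) + 2 * K0 * L * Ex s))).
   2: { right. field. lra. }
   apply Rmult_le_compat_l. apply Rlt_le, Rinv_0_lt_compat; auto.
   apply rsum_abs_le. intros k Hk.
   replace ((v k l s - v i l s) * ccp i k s - (v k l s - v j l s) * ccp j k s)
     with (- Dv l s * ccp i k s + (v k l s - v j l s) * (ccp i k s - ccp j k s)) by (unfold Dv; ring).
   eapply Rle_trans. apply Rabs_triang. rewrite !Rabs_mult, Rabs_Ropp.
   pose proof (cc_bounds d alpha n p x halpha hn hp i k s) as Cb. fold ccp in Cb.
   rewrite (Rabs_pos_eq (ccp i k s)) by lra.
   apply Rplus_le_compat. rewrite Rmult_comm. apply Rmult_le_compat_r. apply Rabs_pos. lra.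
   assert (Rabs (v k l s - v j l s) <= 2 * K0).
   { pose proof (VB k l s Hk Hl Hs). pose proof (VB j l s Hj Hl Hs).
     pose proof (Rabs_triang (v k l s) (- v j l s)). rewrite Rabs_Ropp in H2. unfold Rminus. lra. }
   assert (Rabs (ccp i k s - ccp j k s) <= L * Ex s).
   { unfold ccp, cc. eapply Rle_trans. apply Lip; apply enorm_nonneg.
     apply Rmult_le_compat_l; auto. eapply Rle_trans. apply enorm_rev. right. unfold Ex, enorm. f_equal.
     apply rsum_ext; intros; f_equal; ring. }
   replace (2 * K0 * L * Ex s) with ((2 * K0) * (L * Ex s)) by ring.
   apply Rmult_le_compat; auto; apply Rabs_pos. }
 set (Dsum := fun s => rsum d (fun l => (x i l s - x j l s)^2 + (v i l s - v j l s)^2)).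
 set (C := 1 + 2 * INR n + 2 * K0 * L + INR d * (2 * K0 * L)).
 assert (G: forall s, t <= s <= T -> Dsum s <= 0).
 { apply (gronwall t T Dsum (fun s => rsum d (fun l =>
      ((v i l s - v j l s) * (x i l s - x j l s) + (x i l s - x j l s) * (v i l s - v j l s)) +
      ((ai l s - aj l s) * (v i l s - v j l s) + (v i l s - v j l s) * (ai l s - aj l s)))) C); try lra.
   - intros s Hs. split.
     + unfold Dsum. apply (is_derive_rsum d (fun l s => (x i l s - x j l s)^2 + (v i l s - v j l s)^2)).
       intros l Hl. apply (D_plus (fun s => (x i l s - x j l s)^2) (fun s => (v i l s - v j l s)^2)).
       * eapply D_ext'. apply (D_mult (fun s => x i l s - x j l s) (fun s => x i l s - x j l s)); apply D_minus; eapply dx with (N:=N) (d:=d) (T:=T) (p:=p); eauto; lra.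
         intros; simpl; ring. auto.
       * eapply D_ext'. apply (D_mult (fun s => v i l s - v j l s) (fun s => v i l s - v j l s)); apply D_minus; eapply dv with (N:=N) (d:=d) (T:=T) (p:=p) (x:=x); eauto; lra.
         intros; simpl; ring. auto.
     + unfold Dsum.
       apply Rle_trans with (rsum d (fun l => (1 + 2 * INR n + 2 * K0 * L) * ((x i l s - x j l s)^2 + (v i l s - v j l s)^2)
            + 2 * K0 * L * Ex s ^ 2)).
       * apply rsum_le. intros l Hl. apply term6. apply pos_INR. nra. apply enorm_nonneg. apply DA; auto; lra.
       * rewrite rsum_plus, rsum_const, rsum_scal. unfold Ex. rewrite enorm_sq. unfold C.
         assert (0 <= rsum d (fun m => (x i m s - x j m s)^2)) by apply rsum_sq_nonneg.
         assert (rsum d (fun m => (x i m s - x j m s)^2) <= rsum d (fun l => (x i l s - x j l s)^2 + (v i l s - v j l s)^2)).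
         { apply rsum_le; intros; pose proof (pow2_ge_0 (v i k s - v j k s)); lra. }
         assert (0 <= INR d * (2 * K0 * L)) by (apply Rmult_le_pos; [apply pos_INR|apply Rmult_le_pos; lra]).
         assert (INR d * (2 * K0 * L) * rsum d (fun m => (x i m s - x j m s)^2) <= INR d * (2 * K0 * L) *
           rsum d (fun l => (x i l s - x j l s)^2 + (v i l s - v j l s)^2)) by (apply Rmult_le_compat_l; auto).
         lra.
   - unfold Dsum. apply cw_rsum. intros l Hl. apply cw_plus.
     + apply (cw_ext _ (fun s => (x i l s - x j l s) * (x i l s - x j l s))). intros; ring.
       apply cw_mult; apply cw_minus; eapply cwx' with (N:=N) (d:=d) (T:=T) (p:=p); eauto; lra.
     + apply (cw_ext _ (fun s => (v i l s - v j l s) * (v i l s - v j l s))). intros; ring.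
       apply cw_mult; apply cw_minus; eapply cwv' with (N:=N) (d:=d) (T:=T) (p:=p) (x:=x); eauto; lra.
   - unfold Dsum. apply cw_rsum. intros l Hl. apply cw_plus.
     + apply (cw_ext _ (fun s => (x i l s - x j l s) * (x i l s - x j l s))). intros; ring.
       apply cw_mult; apply cw_minus; eapply cwx' with (N:=N) (d:=d) (T:=T) (p:=p); eauto; lra.
     + apply (cw_ext _ (fun s => (v i l s - v j l s) * (v i l s - v j l s))). intros; ring.
       apply cw_mult; apply cw_minus; eapply cwv' with (N:=N) (d:=d) (T:=T) (p:=p) (x:=x); eauto; lra.
   - unfold Dsum. right. rewrite (rsum_ext d _ (fun _ => 0)). rewrite rsum_const; ring.
     intros l Hl. destruct (H0 l Hl) as [E1 E2]. rewrite E1, E2. ring. }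
 intros s Hs l Hl. pose proof (G s Hs). unfold Dsum in H.
 pose proof (rsum_term_le d (fun l => (x i l s - x j l s)^2 + (v i l s - v j l s)^2) l) as Q.
 assert ((x i l s - x j l s)^2 + (v i l s - v j l s)^2 <= 0).
 { eapply Rle_trans; [apply Q|exact H]. intros; apply Rplus_le_le_0_compat; apply pow2_ge_0. auto. }
 pose proof (pow2_ge_0 (x i l s - x j l s)). pose proof (pow2_ge_0 (v i l s - v j l s)).
 assert ((x i l s - x j l s)^2 = 0) by lra. assert (E0: (x i l s - x j l s) * (x i l s - x j l s) = 0) by (rewrite <- H4; ring). apply Rmult_integral in E0. lra.
Qed.

End Stick.

Fixpoint Ck (k : nat) (U : R -> Prop) (f : R -> R) : Prop :=
  match k with
  | O => True
  | S k' => (forall s, U s -> ex_derive f s) /\ Ck k' U (Derive f)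
  end.

Section CkU.
Variable U : R -> Prop.
Hypothesis hU : open U.

Lemma Ck_ext k : forall f g, (forall s, U s -> f s = g s) -> Ck k U f -> Ck k U g.
Proof. induction k; simpl; auto. intros f g E [H1 H2]. split.
 - intros s Hs. apply (ex_derive_ext_loc f g). apply (filter_imp U); auto. apply H1; auto.
 - apply (IHk (Derive f)); auto. intros s Hs. apply Derive_ext_loc. apply (filter_imp U); auto. Qed.

Lemma Ck_mono k : forall f, Ck (S k) U f -> Ck k U f.
Proof. induction k; simpl; auto. intros f [H1 [H2 H3]]. split; auto. apply IHk. simpl; auto. Qed.

Lemma Ck_const k : forall c, Ck k U (fun _ => c).
Proof. induction k; simpl; auto. intros c. split. intros; apply ex_derive_const.
 apply (Ck_ext k (fun _ => 0)). intros; rewrite Derive_const; auto. apply IHk. Qed.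

Lemma Ck_plus k : forall f g, Ck k U f -> Ck k U g -> Ck k U (fun s => f s + g s).
Proof. induction k; simpl; auto. intros f g [F1 F2] [G1 G2]. split.
 - intros s Hs. apply (ex_derive_plus f g); auto.
 - apply (Ck_ext k (fun s => Derive f s + Derive g s)). intros s Hs. rewrite Derive_plus; auto. apply IHk; auto. Qed.

Lemma Ck_mult k : forall f g, Ck k U f -> Ck k U g -> Ck k U (fun s => f s * g s).
Proof. induction k; simpl; auto. intros f g Hf Hg.
 assert (Hf' := Ck_mono k f Hf). assert (Hg' := Ck_mono k g Hg).
 destruct Hf as [F1 F2], Hg as [G1 G2]. split.
 - intros s Hs. apply (ex_derive_mult f g); auto.
 - apply (Ck_ext k (fun s => Derive f s * g s + f s * Derive g s)). intros s Hs. rewrite Derive_mult; auto.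
   apply Ck_plus; apply IHk; auto. Qed.

Lemma Ck_scal k c f : Ck k U f -> Ck k U (fun s => c * f s).
Proof. intros. apply Ck_mult; auto. apply Ck_const. Qed.

Lemma Ck_minus k f g : Ck k U f -> Ck k U g -> Ck k U (fun s => f s - g s).
Proof. intros. apply (Ck_ext k (fun s => f s + (-1) * g s)). intros; ring. apply Ck_plus; auto. apply Ck_scal; auto. Qed.

Lemma Ck_rsum k n (F : nat -> R -> R) : (forall j, (j < n)%nat -> Ck k U (F j)) -> Ck k U (fun s => rsum n (fun j => F j s)).
Proof. induction n; intros H; simpl. apply Ck_const. apply Ck_plus. apply IHn; intros; apply H; lia. apply H; lia. Qed.

Lemma Ck_Derive_n m : forall k f, Ck (k + m) U f -> Ck k U (Derive_n f m).
Proof. induction m; intros k f H.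
 - rewrite Nat.add_0_r in H. apply (Ck_ext k f); auto.
 - assert (H' : Ck (S k + m) U f) by (replace (S k + m)%nat with (k + S m)%nat by lia; auto).
   apply IHm in H'. simpl in H'. destruct H' as [_ H2]. auto. Qed.

Lemma Ck_ex_derive_n f : (forall k, Ck k U f) -> forall k s, U s -> ex_derive_n f k s.
Proof. intros H k s Hs. destruct k. simpl; auto. simpl.
 pose proof (Ck_Derive_n k 1 f (H _)). simpl in H0. destruct H0. auto. Qed.

End CkU.

Definition Sm U h := forall k, Ck k U h.

Lemma Sm_Derive U h : Sm U h -> Sm U (Derive h).
Proof. intros H k. destruct (H (S k)). auto. Qed.

Lemma Sm_ex_derive U h : Sm U h -> forall s, U s -> ex_derive h s.
Proof. intros H. destruct (H 1%nat). auto. Qed.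

Lemma Ck_comp U V (hU : open U) (hV : open V) k : forall h f, Sm V h -> Ck k U f -> (forall s, U s -> V (f s)) ->
  Ck k U (fun s => h (f s)).
Proof. induction k; simpl; auto. intros h f Hh Hf HUV.
 assert (Hf' := Ck_mono U k f Hf). destruct Hf as [F1 F2]. split.
 - intros s Hs. apply (ex_derive_comp h f); auto. apply (Sm_ex_derive V); auto.
 - apply (Ck_ext U hU k (fun s => Derive f s * Derive h (f s))). intros s Hs. rewrite (Derive_comp h f s); auto.
   apply (Sm_ex_derive V); auto.
   apply Ck_mult; auto. apply IHk; auto. apply Sm_Derive; auto. Qed.

Lemma Sm_of_ex_derive_n U (hU : open U) h : (forall s, U s -> forall k, ex_derive_n h k s) -> Sm U h.
Proof. intros H.
 assert (forall j m, Ck j U (Derive_n h m)).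
 { induction j; simpl; auto. intros m. split. intros s Hs. apply (H s Hs (S m)).
   apply (Ck_ext U hU j (Derive_n h (S m))). intros; reflexivity. apply IHj. }
 intros k. apply (Ck_ext U hU k (Derive_n h 0)). intros; reflexivity. apply H0. Qed.

Lemma open_pos : open (fun s : R => 0 < s).
Proof. apply open_gt. Qed.

Lemma Sm_Rpower : forall j c r, Ck j (fun s => 0 < s) (fun s => c * Rpower s r).
Proof. induction j; simpl; auto. intros c r. split.
 - intros s Hs. apply ex_derive_scal. exists (r * Rpower s (r - 1)). apply is_derive_Reals. apply derivable_pt_lim_power; auto.
 - apply (Ck_ext _ open_pos j (fun s => (c * r) * Rpower s (r - 1))).
   intros s Hs. rewrite Derive_scal.
   assert (E: Derive (fun s => Rpower s r) s = r * Rpower s (r - 1)).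
   { apply is_derive_unique. apply is_derive_Reals. apply derivable_pt_lim_power; auto. }
   rewrite E. ring.
   apply IHj. Qed.

Lemma Sm_sqrt : Sm (fun s => 0 < s) sqrt.
Proof. intros k. apply (Ck_ext _ open_pos k (fun s => 1 * Rpower s (/2))). intros s Hs. rewrite Rpower_sqrt; auto; ring.
 apply Sm_Rpower. Qed.

Lemma filter_forall_nat {F : (R -> Prop) -> Prop} {FF : Filter F} N (P : nat -> R -> Prop) :
  (forall i, (i < N)%nat -> F (P i)) -> F (fun s => forall i, (i < N)%nat -> P i s).
Proof. induction N; intros H.
 - apply (filter_imp (fun _ => True)). intros; lia. apply filter_true.
 - apply (filter_imp (fun s => (forall i, (i < N)%nat -> P i s) /\ P N s)).
   intros s [H1 H2] i Hi. destruct (Nat.eq_dec i N). subst; auto. apply H1; lia.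
   apply filter_and. apply IHN; intros; apply H; lia. apply H; lia. Qed.

Lemma cw_pos D f t : cw D f t -> 0 < f t -> within D (locally t) (fun s => 0 < f s).
Proof. intros H Hp. unfold cw in H.
 pose proof (proj1 (filterlim_locally (F := within D (locally t)) f (f t)) H (mkposreal (f t / 2) ltac:(lra))) as H'.
 eapply filter_imp; [|exact H']. intros s Hs. unfold ball in Hs; simpl in Hs. unfold AbsRing_ball, abs, minus, plus, opp in Hs; simpl in Hs.
 apply Rabs_lt_between in Hs. lra. Qed.

Section Smooth.
Variables (N d : nat) (T alpha : R) (n : nat) (p : R -> R) (x v : nat -> nat -> R -> R).
Hypotheses (hN : (1 <= N)%nat) (hd : (1 <= d)%nat) (hT : 0 < T) (halpha : 0 < alpha < 1)
  (hn : (2 <= n)%nat) (hp : is_psi_n alpha n p) (hsol : is_solution N d T p x v).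

Definition gg i j s := rsum d (fun m => (x i m s - x j m s)^2).

Lemma Sm_p : Sm (fun s => 0 < s) p.
Proof. apply Sm_of_ex_derive_n. apply open_pos. destruct hp as [_ [_ [_ H]]]. auto. Qed.

Lemma Ck_system (U : R -> Prop) (hU : open U) :
  (forall s, U s -> 0 < s < T) ->
  (forall s i j, U s -> (i < N)%nat -> (j < N)%nat -> i <> j -> 0 < gg i j s) ->
  forall k i l, (i < N)%nat -> (l < d)%nat -> Ck k U (x i l) /\ Ck k U (v i l).
Proof. intros HUT Hg. induction k; intros i l Hi Hl. simpl; auto.
 assert (Hv: Ck k U (v i l)) by (apply IHk; auto). split.
 - simpl. split. intros s Hs. exists (v i l s). eapply dx; eauto.
   apply (Ck_ext U hU k (v i l)); auto. intros s Hs. symmetry. apply is_derive_unique. eapply dx; eauto.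
 - simpl. split. intros s Hs. eexists. eapply dv; eauto.
   apply (Ck_ext U hU k (fun s => / INR N * rsum N (fun k' => (v k' l s - v i l s) * cc d p x i k' s))).
   intros s Hs. symmetry. apply is_derive_unique. eapply dv; eauto.
   apply Ck_scal; auto. apply (Ck_rsum U hU k N (fun k' s => (v k' l s - v i l s) * cc d p x i k' s)).
   intros j Hj. apply Ck_mult; auto. apply Ck_minus; auto. apply IHk; auto.
   destruct (Nat.eq_dec j i).
   + subst j. apply (Ck_ext U hU k (fun _ => p (enorm d (fun _ => 0)))). intros s Hs. unfold cc, enorm.
     f_equal. f_equal. apply rsum_ext; intros; ring. apply Ck_const; auto.
   + unfold cc. apply (Ck_comp U (fun s => 0 < s) hU open_pos k p). apply Sm_p.
     * unfold enorm. apply (Ck_comp U (fun s => 0 < s) hU open_pos k sqrt). apply Sm_sqrt.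
       apply (Ck_rsum U hU k d (fun m s => (x i m s - x j m s)^2)). intros m Hm.
       apply (Ck_ext U hU k (fun s => (x i m s - x j m s) * (x i m s - x j m s))). intros; ring.
       apply Ck_mult; auto; apply Ck_minus; auto; apply IHk; auto.
       intros s Hs. apply (Hg s i j); auto.
     * intros s Hs. apply sqrt_lt_R0. apply (Hg s i j); auto.
Qed.

Lemma claim1 t : 0 <= t <= T ->
  (forall i j, (i < N)%nat -> (j < N)%nat -> i <> j -> 0 < enorm d (fun l => x i l t - x j l t)) ->
  exists delta, 0 < delta /\
    forall i l, (i < N)%nat -> (l < d)%nat ->
    forall s, Rabs (s - t) < delta -> 0 < s < T ->
    forall k, ex_derive_n (x i l) k s.
Proof. intros Ht Hnc.
 set (D := fun s => 0 <= s <= T).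
 assert (W: within D (locally t) (fun s => forall i, (i < N)%nat -> forall j, (j < N)%nat -> i <> j -> 0 < gg i j s)).
 { apply filter_forall_nat. intros i Hi. apply filter_forall_nat. intros j Hj.
   destruct (Nat.eq_dec i j). apply (filter_imp (fun _ => True)). intros; contradiction. apply filter_true.
   apply (filter_imp (fun s => 0 < gg i j s)). auto.
   apply cw_pos. unfold gg. apply cw_rsum. intros m Hm.
   apply (cw_ext _ (fun s => (x i m s - x j m s) * (x i m s - x j m s))). intros; ring.
   apply cw_mult; apply cw_minus; eapply cwx; eauto.
   pose proof (Hnc i j Hi Hj n0). unfold enorm in H. fold (gg i j t) in H.
   destruct (Rle_or_lt (gg i j t) 0); auto. rewrite sqrt_neg_0 in H; lra. }
 destruct W as [eps Heps]. exists eps. split. apply cond_pos.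
 set (U := fun s => (t - eps < s /\ s < t + eps) /\ (0 < s /\ s < T)).
 assert (hU : open U). { apply open_and; apply open_and; try apply open_gt; apply open_lt. }
 assert (HC := Ck_system U hU ltac:(intros s Hs; unfold U in Hs; lra)).
 intros i l Hi Hl s Hs Hs' k.
 apply (Ck_ex_derive_n U hU). intros k0. apply HC; auto.
 - intros s0 i0 j0 HU0 Hi0 Hj0 Hij. apply Heps; auto.
   unfold ball; simpl. unfold AbsRing_ball, abs, minus, plus, opp; simpl. unfold U in HU0. apply Rabs_lt_between. lra.
   unfold D, U in *; lra.
 - unfold U. apply Rabs_lt_between in Hs. lra.
Qed.

End Smooth.

Theorem proposition2p2 (N d : nat) (T alpha : R)
  (hN : (1 <= N)%nat) (hd : (1 <= d)%nat) (hT : 0 < T) (halpha : 0 < alpha < 1)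
  (psi : nat -> R -> R)
  (hpsi : forall n, (2 <= n)%nat -> is_psi_n alpha n (psi n))
  (x v : nat -> nat -> nat -> R -> R)
  (hsol : forall n, (2 <= n)%nat -> is_solution N d T (psi n) (x n) (v n)) :
  (forall n, (2 <= n)%nat ->
    (* 1. smoothness near non-collision times *)
    (forall t, 0 <= t <= T ->
       (forall i j, (i < N)%nat -> (j < N)%nat -> i <> j ->
          0 < enorm d (fun l => x n i l t - x n j l t)) ->
       exists delta, 0 < delta /\
         forall i l, (i < N)%nat -> (l < d)%nat ->
         forall s, Rabs (s - t) < delta -> 0 < s < T ->
         forall k, ex_derive_n (x n i l) k s) /\
    (* 2. conservation of the average velocity *)
    (forall l, (l < d)%nat -> forall t, 0 <= t <= T ->
       / INR N * rsum N (fun i => v n i l t) = / INR N * rsum N (fun i => v n i l 0)) /\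
    (* 3. and 5. bound M(n) on velocities and 2 M(n) n on accelerations *)
    (exists M,
       (forall i t, (i < N)%nat -> 0 <= t <= T -> enorm d (fun l => v n i l t) <= M) /\
       (forall i t, (i < N)%nat -> 0 < t < T ->
          enorm d (fun l => Derive (v n i l) t) <= 2 * M * INR n)) /\
    (* 6. sticking *)
    (forall t i j, 0 <= t <= T -> (i < N)%nat -> (j < N)%nat ->
       (forall l, (l < d)%nat -> x n i l t = x n j l t /\ v n i l t = v n j l t) ->
       forall s, t <= s <= T -> forall l, (l < d)%nat -> x n i l s = x n j l s) /\
    (* 7. flocking is preserved *)
    (forall t, 0 <= t <= T ->
       (forall i j l, (i < N)%nat -> (j < N)%nat -> (l < d)%nat -> v n i l t = v n j l t) ->
       forall i l s, (i < N)%nat -> (l < d)%nat -> t <= s <= T -> v n i l s = v n i l t)) /\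
  (* 4. uniform velocity bound under uniformly bounded initial data *)
  ((exists B, forall n i, (2 <= n)%nat -> (i < N)%nat ->
       enorm d (fun l => x n i l 0) <= B /\ enorm d (fun l => v n i l 0) <= B) ->
   exists M, forall n i t, (2 <= n)%nat -> (i < N)%nat -> 0 <= t <= T ->
       enorm d (fun l => v n i l t) <= M).
Proof.
 split.
 - intros n hn. pose proof (hpsi n hn) as hp. pose proof (hsol n hn) as hs.
   split; [|split; [|split; [|split]]].
   + intros t0 Ht Hnc. eapply (claim1 N d T alpha n (psi n) (x n) (v n)); eauto.
   + intros l Hl t0 Ht. eapply (avg_const N d T (psi n) (x n) (v n)); eauto.
   + eapply (claim35 N d T alpha n (psi n) (x n) (v n)); eauto.
   + intros t0 i j Ht Hi Hj H0 s Hs l Hl. eapply (claim6 N d T alpha n (psi n) (x n) (v n)); eauto.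
   + intros t0 Ht H0 i l s Hi Hl Hs. eapply (claim7 N d T alpha n (psi n) (x n) (v n)); eauto.
 - intros [B HB]. exists (sqrt (INR d) * B). intros n i t0 hn Hi Ht.
   assert (B0: 0 <= B). { destruct (HB 2%nat 0%nat (le_n 2) ltac:(lia)) as [_ H2]. pose proof (enorm_nonneg d (fun l => v 2%nat 0%nat l 0)). lra. }
   apply enorm_le; auto. intros l Hl.
   eapply (v_abs_bound N d T alpha n (psi n) (x n) (v n)); eauto.
   intros k l' Hk Hl'. eapply Rle_trans. apply (coord_le_enorm d (fun l => v n k l 0)); auto. apply HB; auto.
Qed.
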